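(* Let $X$ be an $n$-globular set and let $y\in T_n^{D^s}(T_n^{D^s}(X))$ be an element whose underlying diagram is a block $B$ and whose minimal labels $D_1,\dots,D_\ell\in T_n^{D^s}(X)$ are nontrivial with $M(D_j)<m(B)$ for all $j$. Then $H(D_j)=H(\mu_X(y))-1$ for all $j$.
   Context: An $n$-globular set $X$: sets $X_0,\dots,X_n$ and maps $s,t\colon X_k\to X_{k-1}$ with $ss=st$, $ts=tt$. $\langle\ell\rangle=\{1<\dots<\ell\}$. A simple $k$-string diagram $D$: numbers $\ell_0=1,\ell_1,\dots,\ell_k\ge0$ and arbitrary functions $v^m\colon\langle\ell_m\rangle\to\langle\ell_{m-1}\rangle$; its source and target are both $(v^1,\dots,v^{k-1})$. An $X$-labelling of $D$: elements $x^m_i\in X_m$ ($0\le m\le k$, $1\le i\le\ell_m$) such that for $m\ge1$, $s(x^m_i)=x^{m-1}_{v^m(i)}$ if $i=\min\{j:v^m(j)=v^m(i)\}$ and otherwise $s(x^m_i)=t(x^m_p)$ with $p=\max\{j<i:v^m(j)=v^m(i)\}$. The source of $(D,x)$ is $(s(D),(x^m_i)_{m\le k-1})$; its target is the same except that for $i\in\mathrm{im}(v^k)$ the label $x^{k-1}_i$ is replaced by $t(x^k_p)$, $p=\max\{j:v^k(j)=i\}$. $T_n^{D^s}(X)_k$ is the set of $X$-labelled simple $k$-string diagrams, an $n$-globular set with these source/target maps. The multiplication $\mu_X\colon T_n^{D^s}(T_n^{D^s}(X))\to T_n^{D^s}(X)$: if a $k$-diagram $D$ is labelled by labelled $m$-diagrams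 $E^m_i$ with underlying diagrams $D^m_i$ (compatibility forces $\ell_j(D^m_i)=\ell_j(D^{m-1}_{v^m(i)})$, $v^j(D^m_i)=v^j(D^{m-1}_{v^m(i)})$ for $j<m$), the composite has level-$m$ set $\coprod_{i=1}^{\ell_m}\langle\ell_m(D^m_i)\rangle$, ordered by component index first and then internally, with map to level $m-1$ sending $a$ in component $i$ to $v^m(D^m_i)(a)$ in component $v^m(i)$, and with $a$ in component $i$ at level $m$ labelled by the $m$-dimensional label at $a$ of $E^m_i$. All notions below for labelled diagrams refer to the underlying diagram. $H(D)=|\{i:\ell_i(D)>1\}|$. $D$ is nondegenerate if $\ell_i(D)>0$ for all $1\le i\le k$, nontrivial if moreover $\ell_i(D)>1$ for some $i$. For nontrivial $D$: $m(D)=\min\{j:\ell_j(D)>1\}$, $M(D)=\max\{j:\ell_j(D)>1\}$. A block is a nontrivial $D$ with $m(D)=M(D)$; the blocks are $B^k(i,\ell,p)$ ($1\le i<k$, $\ell>1$, $1\le p\le\ell$: $\ell_i=\ell$, $\ell_j=1$ for $j\neq i$, $v^{i+1}=(p)$, other maps constant) and $B^k(k,\ell)$ ($\ell>1$: $\ell_k=\ell$, $\ell_j=1$ for $j<k$). The minimal labels of a labelled block are $x_1,\dots,x_\ell$ where, for $B^k(i,\ell,p)$, $x_j=x^i_j$ ($j\ne p$) and $x_p=x^k_1$, and for $B^k(k,\ell)$, $x_j=x^k_j$; they determine the labelling. *)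

(* Defs.v *)
From mathcomp Require Import all_boot.
Set Implicit Arguments. Unset Strict Implicit. Unset Printing Implicit Defensive.

(* An n-globular set is the restriction to levels 0..n. *)
Record preglob := PreGlob {
  cell : nat -> Type;
  gsrc : forall k, cell k.+1 -> cell k;
  gtgt : forall k, cell k.+1 -> cell k }.

Definition globular (X : preglob) : Prop :=
  forall k (x : cell X k.+2),
    @gsrc X k (@gsrc X k.+1 x) = @gsrc X k (@gtgt X k.+1 x) /\
    @gtgt X k (@gsrc X k.+1 x) = @gtgt X k (@gtgt X k.+1 x).

(* A (raw) labelled simple string diagram.  [dg] lists the levels 1..k:
   level m is the sequence (v^m(1),...,v^m(l_m)), all indices 0-based
   (element i of <l> is stored as i-1).  [lab m] is the sequence of labels
   x^m_1,...,x^m_{l_m}. *)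
Record ldiag (X : preglob) := LDiag {
  dg : seq (seq nat);
  lab : forall m, seq (cell X m) }.

Section Diagrams.
Variable X : preglob.
Implicit Types d : ldiag X.

Definition dimd d := size (dg d).
Definition ell d m := if m is m'.+1 then size (nth [::] (dg d) m') else 1.
Definition lev d m : seq nat := nth [::] (dg d) m.-1.
Definition vmap d m i := nth 0 (lev d m) i.

(* p = max{q < i : v^{m}(q) = v^{m}(i)}, meaningful when that set is nonempty *)
Definition prev_same d m i := \max_(q < i | vmap d m q == vmap d m i) (q : nat).
Definition has_prev d m i := has (fun q => vmap d m q == vmap d m i) (iota 0 i).

Definition valid (k : nat) d : Prop :=
  [/\ dimd d = k,
      (forall m i, 0 < m <= k -> i < ell d m -> vmap d m i < ell d m.-1),
      (forall m, size (lab d m) = (if m <= k then ell d m else 0)) &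
      (forall m i, m < k -> i < ell d m.+1 ->
         if has_prev d m.+1 i then
           omap (@gsrc X m) (onth (lab d m.+1) i)
             = omap (@gtgt X m) (onth (lab d m.+1) (prev_same d m.+1 i))
         else
           omap (@gsrc X m) (onth (lab d m.+1) i)
             = onth (lab d m) (vmap d m.+1 i))].

Definition lsrc (k : nat) d : ldiag X :=
  LDiag (take k (dg d)) (fun m => if m <= k then lab d m else [::]).

(* labels at level m of the target of a labelled (m+1)-diagram: x^m_i is
   replaced by t(x^{m+1}_p), p = max{q : v^{m+1}(q) = i}, if i is in the image *)
Definition retarget (m : nat) d : seq (cell X m) :=
  map (fun ix : nat * cell X m =>
         let qs := [seq q <- iota 0 (ell d m.+1) | vmap d m.+1 q == ix.1] in
         if qs is q0 :: _ then
           match onth (lab d m.+1) (last q0 qs) with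
           | Some z => @gtgt X m z
           | None => ix.2
           end
         else ix.2)
      (zip (iota 0 (size (lab d m))) (lab d m)).

Definition ltgt (k : nat) d : ldiag X :=
  LDiag (take k (dg d))
        (fun m => if m < k then lab d m else if m == k then retarget m d else [::]).

Definition H d := count (fun s => 1 < size s) (dg d).
Definition nondegenerate d := all (fun s => 0 < size s) (dg d).
Definition nontrivial d := nondegenerate d && has (fun s => 1 < size s) (dg d).
(* m(D), M(D) (1-based level numbers), meaningful for nontrivial D *)
Definition mD d := (find (fun s => 1 < size s) (dg d)).+1.
Definition MD d := \max_(i < dimd d | 1 < ell d i.+1) (i.+1 : nat).
Definition is_block d := nontrivial d && (mD d == MD d).

End Diagrams.

(* T_n^{D^s}(X) as a (pre)globular set (raw labelled diagrams; validity is
   imposed separately). *)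
Definition TX (X : preglob) : preglob :=
  @PreGlob (fun _ => ldiag X) (fun k => @lsrc X k) (fun k => @ltgt X k).

Definition dflt (X : preglob) : ldiag X := @LDiag X [::] (fun _ => [::]).

Section Mult.
Variable X : preglob.
Implicit Types y : ldiag (TX X).

Definition E y m i : ldiag X := nth (dflt X) (lab y m) i.

Definition validTT (k : nat) y : Prop :=
  valid k y /\ (forall m i, m <= k -> i < ell y m -> valid m (E y m i)).

(* position of the first element of component c at level m of the composite *)
Definition offset y m c := sumn [seq ell (E y m i) m | i <- iota 0 c].

Definition mu_dg y : seq (seq nat) :=
  [seq flatten [seq [seq offset y m.-1 (vmap y m i) + a | a <- lev (E y m i) m]
               | i <- iota 0 (ell y m)]
  | m <- iota 1 (dimd y)].

Definition mu_lab y m : seq (cell X m) :=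
  flatten [seq lab (E y m i) m | i <- iota 0 (ell y m)].

Definition mu y : ldiag X := LDiag (mu_dg y) (mu_lab y).

(* minimal labels x_{j+1} (0-based j) of a labelled block y *)
Definition min_label y j : ldiag X :=
  let i := mD y in let k := dimd y in
  if i < k then (if j == vmap y i.+1 0 then E y k 0 else E y i j)
  else E y k j.

End Mult.

(* Main.v *)
Require Import Defs.
From mathcomp Require Import all_boot.
Set Implicit Arguments. Unset Strict Implicit. Unset Printing Implicit Defensive.

Lemma onth_some T (x0 : T) s i : i < size s -> onth s i = Some (nth x0 s i).
Proof. by move=> h; rewrite onthE (nth_map x0). Qed.

Lemma prev_lt X (d : ldiag X) m i : has_prev d m i -> prev_same d m i < i.
Proof.
case: i => [|i] //= _; rewrite ltnS /prev_same.
by apply/bigmax_leqP => q _; rewrite -ltnS ltn_ord.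
Qed.

Lemma ell_take X (a b : ldiag X) m r : take m (dg a) = dg b -> r <= m -> ell a r = ell b r.
Proof. by move=> e; case: r => [|r] //= hr; rewrite -e nth_take. Qed.

Lemma lvl1 X (d : ldiag X) r : nondegenerate d -> r < dimd d -> 0 < ell d r.+1.
Proof. by move=> /all_nthP h hr; apply: h. Qed.

Lemma lvl_MD X (d : ldiag X) r : r < dimd d -> 1 < ell d r.+1 -> r.+1 <= MD d.
Proof.
move=> hr h1.
exact: (@leq_bigmax_cond _ (fun i : 'I_(dimd d) => 1 < ell d i.+1)
   (fun i => (i : nat).+1) (Ordinal hr) h1).
Qed.

Lemma down X k (y : ldiag (TX X)) m c : validTT k y -> m < k -> c < ell y m.+1 ->
  exists2 c', c' < ell y m &
    take m (dg (E y m.+1 c)) = dg (E y m c') /\ (c = 0 -> c' = vmap y m.+1 0).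
Proof.
move=> [[_ hv hs hl] _] hm; elim/ltn_ind: c => c IH hc.
have hsz : forall q, q <= k -> size (lab y q) = ell y q.
  by move=> q hq; rewrite hs hq.
have := hl m c hm hc; case: ifP => hp e0.
- have hpc := prev_lt hp.
  have [c' hc' [e _]] := IH _ hpc (ltn_trans hpc hc).
  exists c' => //; split; last by move=> c0; rewrite c0 in hp.
  rewrite -e; move: e0.
  rewrite !(onth_some (dflt X)) ?hsz // ?(ltn_trans hpc hc) //=.
  by move=> [] e1 *; first [exact: e1 | exact: (congr1 (@dg X) e1)].
- have hvm := hv m.+1 c hm hc.
  exists (vmap y m.+1 c) => //; split => [|->] //.
  move: e0; rewrite !(onth_some (dflt X)) ?hsz // ?(ltnW hm) //=.
  by move=> [] e1 *; first [exact: e1 | exact: (congr1 (@dg X) e1)].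
Qed.

Lemma L1 X k (y : ldiag (TX X)) i0 : validTT k y ->
  (forall m, 0 < m <= k -> m != i0 -> ell y m = 1) ->
  forall m c r, m <= k -> c < ell y m -> 0 < r <= m -> r < i0 ->
  ell (E y m c) r = ell (E y r 0) r.
Proof.
move=> hTT hu; elim=> [|m IH] c r hmk hc /andP[r0 rm] ri; first by case: r r0 rm ri.
case: (eqVneq r m.+1) => [er|nr].
  subst r; move: hc; rewrite hu ?r0 ?hmk ?(ltn_eqF ri) //.
  by rewrite ltnS leqn0 => /eqP ->.
have rm' : r <= m by move: rm; rewrite leq_eqVlt (negbTE nr).
have [c' hc' [e _]] := down hTT hmk hc.
rewrite (ell_take e rm'); apply: IH => //; first exact: ltnW.
by rewrite r0.
Qed.

Lemma L2 X k (y : ldiag (TX X)) : validTT k y ->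
  (forall q, 0 < q <= k -> 0 < ell y q) ->
  forall a m', a < m' <= k -> (forall q, a < q < m' -> ell y q = 1) ->
  forall r, r <= a -> ell (E y m' 0) r = ell (E y a (vmap y a.+1 0)) r.
Proof.
move=> hTT hnd a; elim=> [|m IH] // /andP[am mk] hq r ra.
have hc0 : 0 < ell y m.+1 by apply: hnd.
have [c' hc' [e ec]] := down hTT mk hc0.
case: (eqVneq a m) => [eam|nam].
  by subst a; rewrite (ell_take e ra) (ec erefl).
have am' : a < m by move: am; rewrite ltnS leq_eqVlt (negbTE nam).
have e1 : ell y m = 1 by apply: hq; rewrite am' ltnSn.
move: hc'; rewrite e1 ltnS leqn0 => /eqP c0; subst c'.
rewrite (ell_take e (leq_trans ra (ltnW am'))).
apply: IH => //; first by rewrite am' ltnW.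
by move=> q /andP[aq qm]; apply: hq; rewrite aq ltnW.
Qed.

Lemma count_idx (T : Type) (x0 : T) (P : pred T) s :
  count P s = count (fun r => P (nth x0 s r)) (iota 0 (size s)).
Proof. by rewrite -{1}(mkseq_nth x0 s) /mkseq count_map. Qed.

Lemma sumn_ones (s : seq nat) : sumn [seq 1 | i <- s] = size s.
Proof. by elim: s => //= a s ->. Qed.

From mathcomp Require Import zify.

Theorem mainTheorem7 (X : preglob) (n k : nat) (y : ldiag (TX X)) :
  globular X -> k <= n -> validTT k y -> is_block y ->
  (forall j, j < ell y (mD y) ->
     nontrivial (min_label y j) /\ MD (min_label y j) < mD y) ->
  forall j, j < ell y (mD y) -> H (min_label y j) = H (mu y) - 1.
Proof.
move=> _ _ hTT hB hmin j hj.
have [[hdim hv hs hl] hE] := hTT.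
case/andP: hB => /andP[hnd hhas] /eqP hmM.
have nondeg : forall q, 0 < q <= k -> 0 < ell y q.
  by case=> [|q] // /andP[_ hq]; apply: lvl1; rewrite // hdim.
have hi0 : 0 < mD y <= k by rewrite /mD ltnS -hdim /dimd -has_find.
have hi0l : 1 < ell y (mD y) by rewrite /mD /=; exact: (nth_find [::] hhas).
have huniq : forall m, 0 < m <= k -> m != mD y -> ell y m = 1.
  case=> [|m] // /andP[_ mk] mi.
  have := nondeg m.+1 mk.
  rewrite leq_eqVlt eq_sym => /orP[/eqP //|hgt]; exfalso.
  case: (ltngtP m.+1 (mD y)) => c.
  - move: c; rewrite /mD ltnS => /(before_find [::]) h.
    by move: hgt; rewrite /= h.
  - have := lvl_MD (d:=y) (r:=m) _ hgt; rewrite hdim => /(_ mk).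
    by rewrite -hmM leqNgt c.
  - by rewrite c eqxx in mi.
set p := vmap y (mD y).+1 0.
have hp : mD y < k -> p < ell y (mD y).
  move=> hik; have := hv (mD y).+1 0 hik (nondeg (mD y).+1 hik); by [].
have ml1 : mD y < k -> min_label y p = E y k 0.
  by move=> hik; rewrite /min_label /= hdim hik eqxx.
have ml2 : forall jj, mD y < k -> jj != p -> min_label y jj = E y (mD y) jj.
  by move=> jj hik njp; rewrite /min_label /= hdim hik (negbTE njp).
have ml3 : forall jj, ~~ (mD y < k) -> min_label y jj = E y k jj.
  by move=> jj hik; rewrite /min_label /= hdim (negbTE hik).
have dimE : forall m c, m <= k -> c < ell y m -> dimd (E y m c) = m.
  by move=> m c h1 h2; case: (hE m c h1 h2).
have Dfact : forall jj, jj < ell y (mD y) -> forall r, 0 < r -> mD y <= r ->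
    r <= dimd (min_label y jj) -> ell (min_label y jj) r = 1.
  move=> jj hjj [|r] // _ h1 h2; have [/andP[hndD _] hM] := hmin jj hjj.
  apply/eqP; rewrite eqn_leq (lvl1 hndD h2) andbT leqNgt; apply/negP => hg.
  have := leq_ltn_trans (lvl_MD h2 hg) hM; by rewrite ltnNge h1.
have hA : forall c, c < ell y (mD y) -> ell (E y (mD y) c) (mD y) = 1.
  move=> c hc; case: (ltnP (mD y) k) => hik.
  - case: (eqVneq c p) => [->|ncp].
    + rewrite -(L2 hTT nondeg (a:=mD y) (m':=k)) ?hik ?leqnn //; last first.
        move=> q /andP[a b]; apply: huniq; first by lia.
        by rewrite gtn_eqF.
      rewrite -(ml1 hik); apply: Dfact => //; try lia.
      rewrite (ml1 hik) dimE //; apply: nondeg; lia.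
    + rewrite -(ml2 _ hik ncp); apply: Dfact => //; try lia.
      by rewrite (ml2 _ hik ncp) dimE // ltnW.
  - have e : mD y = k by lia.
    have nik : ~~ (mD y < k) by rewrite -leqNgt.
    move: hc; rewrite e => hc.
    rewrite -(ml3 c nik); apply: Dfact; rewrite ?e //; first by lia.
    by rewrite (ml3 c nik) dimE.
have hBB : mD y < k -> forall m, mD y < m <= k -> ell (E y m 0) m = 1.
  move=> hik m /andP[a b].
  have Dk : ell (E y k 0) m = 1.
    rewrite -(ml1 hik); apply: Dfact => //; try lia.
    rewrite (ml1 hik) dimE //; apply: nondeg; lia.
  case: (ltngtP m k) => c; [| by rewrite leqNgt c in b | by subst].
  have v0 : vmap y m.+1 0 = 0.
    have := hv m.+1 0 c (nondeg m.+1 c); rewrite /= huniq //; first by case: (vmap _ _ _).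
    - lia.
    - by rewrite gtn_eqF.
  rewrite -Dk (L2 hTT nondeg (a:=m) (m':=k)) ?v0 //; first by rewrite c leqnn.
  move=> q /andP[a1 b1]; apply: huniq; first by lia.
  by rewrite gtn_eqF //; lia.
have [mm [cc [eD hmk him hcc]]] : exists mm cc, [/\ min_label y j = E y mm cc,
    mm <= k, mD y <= mm & cc < ell y mm].
  case: (ltnP (mD y) k) => hik.
  - case: (eqVneq j p) => [->|njp].
    + exists k, 0; split; [exact: ml1 | exact: leqnn | exact: ltnW | apply: nondeg; lia].
    + by exists (mD y), j; split; [exact: ml2 | exact: ltnW | exact: leqnn | done].
  - have e : mD y = k by lia.
    exists k, j; split; [apply: ml3; by rewrite -leqNgt | exact: leqnn | by rewrite e | by rewrite -e].
have hdD : dimd (min_label y j) = mm by rewrite eD dimE.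
pose N := count (fun r => 1 < ell (E y r.+1 0) r.+1) (iota 0 (mD y).-1).
have hHD : H (min_label y j) = N.
  rewrite /H (count_idx [::]) -/(dimd _) hdD.
  have -> : mm = (mD y).-1 + (mm - (mD y).-1) by lia.
  rewrite iotaD count_cat add0n.
  rewrite -[N]addn0 /N; congr (_ + _).
    apply: eq_in_count => r; rewrite mem_iota add0n => /andP[_ hr].
    rewrite eD /=.
    have := L1 hTT huniq (m := mm) (c := cc) (r := r.+1) hmk hcc.
    by rewrite /= => ->; lia.
  rewrite (eq_in_count (a2 := pred0)) ?count_pred0 //.
  move=> r; rewrite mem_iota => /andP[h1 h2].
  have := Dfact j hj r.+1 erefl; rewrite hdD /= => -> //; lia.
have hHmu : H (mu y) = N + 1.
  rewrite /H /mu /= /mu_dg count_map -/(dimd y) hdim.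
  have -> : iota 1 k = map succn (iota 0 k) by rewrite (iotaDl 1 0).
  rewrite count_map.
  rewrite (eq_in_count (a2 := fun r => 1 < sumn [seq ell (E y r.+1 i) r.+1 | i <- iota 0 (ell y r.+1)])); last first.
    move=> r _ /=; rewrite size_flatten /shape -map_comp.
    by congr (1 < sumn _); apply: eq_map => i /=; rewrite size_map.
  have -> : k = (mD y).-1 + (1 + (k - mD y)) by lia.
  rewrite iotaD count_cat iotaD count_cat add0n /N; congr (_ + _).
    apply: eq_in_count => r; rewrite mem_iota add0n => /andP[_ hr].
    rewrite huniq /=; first by rewrite addn0.
    - lia.
    - apply/negP => /eqP; lia.
  have hc1 : forall (P : pred nat) x, count P [:: x] = P x by move=> P x /=; rewrite addn0.
  have -> : iota (mD y).-1 1 = [:: (mD y).-1] by []. rewrite hc1.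
  have -> : (mD y).-1.+1 = mD y by lia.
  rewrite (_ : [seq ell (E y (mD y) i) (mD y) | i <- iota 0 (ell y (mD y))] = [seq 1 | i <- iota 0 (ell y (mD y))]); last first.
    by apply/eq_in_map => i; rewrite mem_iota /= => hi; exact: hA.
  rewrite sumn_ones size_iota hi0l.
    rewrite (eq_in_count (a2 := pred0)) ?count_pred0 //.
    move=> r; rewrite mem_iota => /andP[h1 h2].
    rewrite huniq.
      have -> : [seq ell (E y r.+1 i) r.+1 | i <- iota 0 1] = [:: ell (E y r.+1 0) r.+1] by [].
      have -> : sumn [:: ell (E y r.+1 0) r.+1] = ell (E y r.+1 0) r.+1 by rewrite /= addn0.
      rewrite hBB //; lia.
    - lia.
    - apply/negP => /eqP; lia.
by rewrite hHD hHmu addnK.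
Qed.
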